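(* Consider the single-input single-output discrete-time closed-loop setting described in the context, and fix a DFT frequency $\omega_\ell = 2\pi\ell/N$ at which $S(e^{j\omega_\ell})R(e^{j\omega_\ell}) \neq 0$. Let $Z_{\mathrm{dir}} := \frac{1}{SR}\big(\bar V_y - G\bar V_u\big)$ and $Z_{\mathrm{io}} := \frac{1}{SR}\big(\bar V_y^{(1)} - G\bar V_u^{(2)}\big)$ be the limits in distribution, as $\sigma\to 0$, of $\sigma^{-1}(\widehat G_{\mathrm{dir}}-G)$ and $\sigma^{-1}(\widehat{\widehat G}_{\mathrm{io}}-G)$ respectively. Let $\bar\sigma_{yu} := \mathbb{E}[\bar V_y \bar V_u^{\ast}]$. If $\Re\big[G^{\ast}(e^{j\omega_\ell})\,\bar\sigma_{yu}\big] < 0$, then \[ \mathbb{E}\big[|Z_{\mathrm{io}}|^2\big] < \mathbb{E}\big[|Z_{\mathrm{dir}}|^2\big], \] i.e., the asymptotic variance (as $\sigma\to0$) of $\widehat{\widehat G}_{\mathrm{io}}$ is strictly smaller than that of $\widehat G_{\mathrm{dir}}$ at $\omega_\ell$.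
   Context: Setting: unit sample time, $\mathrm{q}$ the forward shift operator. Plant $G(\mathrm{q})$ and controller $C(\mathrm{q})$ are linear time-invariant and the closed loop is stable; the sensitivity is $S = 1/(1+GC)$. Noise $v(k) = H(\mathrm{q})e(k)$ with $H$ a stable spectral factor and $e(k)=\sigma\bar e(k)$, where $\bar e$ is a zero-mean unit-variance white process whose distribution does not depend on $\sigma>0$. Reference $r(k)=r_2(k)+C(\mathrm{q})r_1(k)$ with $r_1,r_2$ known, $r$ periodic with period $N$. Plant output and input: $y = S G r + S v$, $u = S r - S C v$. Data $\{(r_k,u_k,y_k)\}_{k=0}^{N-1}$ consist of one period collected in steady state, synchronized with $r$. The DFT of a record $x_0,\dots,x_{N-1}$ is $X(e^{j\omega_\ell}) = N^{-1/2}\sum_{k=0}^{N-1}x_k e^{-j\omega_\ell k}$, $\omega_\ell = 2\pi\ell/N$. At the fixed frequency, $G,S,C,H$ denote the values of the transfer functions at $e^{j\omega_\ell}$, and $R,U,Y$ the DFTs of $r,u,y$. The noise contributions $V_y, V_u$ are defined by $Y = SGR + V_y$, $U = SR + V_u$; they are proportional to $\sigma$, and $\bar V_y := V_y/\sigma$, $\bar V_u := V_u/\sigma$ are zero-mean complex random variables with finite variances whose distributions do not depend on $\sigma$. Direct estimator: $\widehat G_{\mathrm{dir}} := Y/U$. Two-experiment joint input-output estimator: a second, independent experiment with the same excitation $r$ (same deterministic parts, independent noise) is performed; $Y^{(1)}$ is the output DFT from experiment 1 and $U^{(2)}$ the input DFT from experiment 2, with normalized noise contributions $\bar V_y^{(1)}$,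 $\bar V_u^{(2)}$ (independent of each other, distributed as $\bar V_y$, $\bar V_u$ respectively); $\widehat{\widehat G}_{\mathrm{io}} := \dfrac{Y^{(1)}/R}{U^{(2)}/R}$. The asymptotic variance of an estimator is $\mathbb{E}|Z|^2$ of its limiting distribution $Z$ of $\sigma^{-1}(\widehat G - G)$ as $\sigma\to0$. *)

(* Defs.v *)
From HB Require Import structures.
From mathcomp Require Import all_boot all_order all_algebra complex.
From mathcomp Require Import all_classical all_reals all_analysis.
Set Implicit Arguments. Unset Strict Implicit. Unset Printing Implicit Defensive.
Import Order.TTheory GRing.Theory Num.Theory.

Local Open Scope classical_set_scope.
Local Open Scope ring_scope.

Section complex_rv.
Context {R : realType} {d : measure_display} {T : measurableType d}.
Variable P : probability T R.

Definition cre (X : T -> R[i]) : T -> R := fun t => complex.Re (X t).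
Definition cim (X : T -> R[i]) : T -> R := fun t => complex.Im (X t).

Definition cpair (X : T -> R[i]) : T -> R * R := fun t => (cre X t, cim X t).

Definition finite_var (X : T -> R[i]) : Prop :=
  cre X \in Lfun P 2%E /\ cim X \in Lfun P 2%E.

Definition zero_mean (X : T -> R[i]) : Prop :=
  ('E_P[cre X] = 0 /\ 'E_P[cim X] = 0)%E.

Definition cexpect (X : T -> R[i]) : R[i] :=
  ((fine 'E_P[cre X]%E) +i* (fine 'E_P[cim X]%E))%C.

Definition second_moment (X : T -> R[i]) : \bar R :=
  ('E_P[fun t => (complex.Re (X t) ^+ 2 + complex.Im (X t) ^+ 2)%R])%E.

Definition same_distribution (X Y : T -> R[i]) : Prop :=
  forall A : set (R * R), measurable A ->
    P (cpair X @^-1` A) = P (cpair Y @^-1` A).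

Definition cindependent (X Y : T -> R[i]) : Prop :=
  forall A B : set (R * R), measurable A -> measurable B ->
    P (cpair X @^-1` A `&` cpair Y @^-1` B) =
    (P (cpair X @^-1` A) * P (cpair Y @^-1` B))%E.

End complex_rv.

Definition Zlim {R : realType} {T : Type} (G S Rr : R[i]) (Vy Vu : T -> R[i])
  : T -> R[i] := fun t => (Vy t - G * Vu t) / (S * Rr).

(* Main.v *)
Require Import Defs.
From HB Require Import structures.
From mathcomp Require Import all_boot all_order all_algebra complex.
From mathcomp Require Import all_classical all_reals all_analysis measurable_realfun.
From mathcomp Require Import ring lra.
Set Implicit Arguments. Unset Strict Implicit.
Import Order.TTheory GRing.Theory Num.Theory.
Local Open Scope ring_scope.
Local Open Scope classical_set_scope.

Section indep.
Context d (T : measurableType d) (R : realType) (P : probability T R).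
Variables (X Y : T -> R) (mX : measurable_fun setT X) (mY : measurable_fun setT Y).
Hypothesis indep : forall A B, measurable A -> measurable B ->
  P (X @^-1` A `&` Y @^-1` B) = (P (X @^-1` A) * P (Y @^-1` B))%E.
Let mXY : measurable_fun setT (fun t => (X t, Y t)).
Proof. exact: measurable_fun_pair. Qed.
Let Xp : {mfun T >-> R} := HB.pack X (isMeasurableFun.Build _ _ _ _ _ mX).
Let Yp : {mfun T >-> R} := HB.pack Y (isMeasurableFun.Build _ _ _ _ _ mY).
Let XYp : {mfun T >-> (R * R)%type} :=
  HB.pack (fun t => (X t, Y t)) (isMeasurableFun.Build _ _ _ _ _ mXY).

Lemma indep_mul0 : P.-integrable setT (EFin \o (X \* Y)) ->
  P.-integrable setT (EFin \o Y) -> ('E_P[Y] = 0)%E -> ('E_P[X \* Y] = 0)%E.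
Proof.
move=> iXY iY EY.
pose mu1 := distribution P Xp. pose mu2 := distribution P Yp.
pose mu := distribution P XYp.
have muE W : measurable W -> (mu1 \x mu2)%E W = mu W.
  apply: product_measure_unique => A B mA mB.
  by rewrite /mu /mu1 /mu2 /distribution /pushforward /= -indep.
pose F := fun z : (R * R)%type => (z.1 * z.2)%:E.
have mF : measurable_fun setT F.
  apply/measurable_EFinP; apply: measurable_funM.
    exact: measurable_fst. exact: measurable_snd.
have iF : mu.-integrable setT F.
  apply: integrable_pushforward => //.
have iF' : (mu1 \x mu2)%E.-integrable setT F.
  apply/integrableP; split => //.
  rewrite (eq_measure_integral mu); last by move=> A mA _; exact: muE.
  by case/integrableP: iF.
rewrite unlock.
have -> : (\int[P]_w ((X \* Y) w)%:E = \int[mu]_z F z)%E.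
  by rewrite integral_pushforward // preimage_setT.
rewrite (eq_measure_integral (mu1 \x mu2)%E); last by move=> A mA _; symmetry; exact: muE.
rewrite -(integral12_prod_meas1 iF').
have iy : mu2.-integrable setT EFin.
  apply: integrable_pushforward => //.
have Ey : (\int[mu2]_y y%:E = 0)%E.
  rewrite integral_pushforward //.
  by rewrite preimage_setT -EY unlock.
rewrite /fubini_F.
transitivity (\int[mu1]_x (cst 0%E x))%E; last exact: integral0.
apply: eq_integral => x _.
rewrite /F /=.
under eq_integral do rewrite EFinM.
by rewrite integralZl // Ey mule0.
Qed.
End indep.

Section sd.
Context d d' (T : measurableType d) (T' : measurableType d') (R : realType)
  (P : probability T R).
Variables (X Y : T -> T') (mX : measurable_fun setT X) (mY : measurable_fun setT Y).
Hypothesis law : forall A, measurable A -> P (X @^-1` A) = P (Y @^-1` A).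
Let Xp : {mfun T >-> T'} := HB.pack X (isMeasurableFun.Build _ _ _ _ _ mX).
Let Yp : {mfun T >-> T'} := HB.pack Y (isMeasurableFun.Build _ _ _ _ _ mY).

Lemma sd_E (f : T' -> R) : measurable_fun setT f -> (forall x, 0 <= f x) ->
  ('E_P[f \o X] = 'E_P[f \o Y])%E.
Proof.
move=> mf f0; rewrite unlock.
transitivity (\int[distribution P Xp]_y (f y)%:E)%E.
  by rewrite ge0_integral_distribution //; exact/measurable_EFinP.
rewrite (eq_measure_integral (distribution P Yp)); last first.
  by move=> A mA _; exact: law.
by rewrite ge0_integral_distribution //; exact/measurable_EFinP.
Qed.
End sd.

Section lin.
Context d (T : measurableType d) (R : realType) (P : probability T R).
Definition rE (f : T -> R) := fine ('E_P[f])%E.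

Lemma EfE f : f \in Lfun P 1 -> ('E_P[f] = (rE f)%:E)%E.
Proof. by move=> hf; rewrite /rE fineK // expectation_fin_num. Qed.

Lemma LmX f p : f \in Lfun P p -> measurable_fun setT f.
Proof. by rewrite inE => /andP[]; rewrite inE. Qed.

Lemma L1_sq f : f \in Lfun P 2%:E -> (fun t => f t ^+ 2) \in Lfun P 1.
Proof. by move=> hf; apply/Lfun1_integrable; exact: Lfun2_integrable_sqr. Qed.

Lemma L1_mul f g : f \in Lfun P 2%:E -> g \in Lfun P 2%:E ->
  (fun t => f t * g t) \in Lfun P 1.
Proof. exact: Lfun2_mul_Lfun1. Qed.

Lemma L1_2 f : f \in Lfun P 2%:E -> f \in Lfun P 1.
Proof. by apply: Lfun_subset12; exact: fin_num_measure. Qed.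

Lemma L1_lin4 (f1 f2 f3 f4 : T -> R) k1 k2 k3 k4 :
  f1 \in Lfun P 1 -> f2 \in Lfun P 1 -> f3 \in Lfun P 1 -> f4 \in Lfun P 1 ->
  (fun t => k1 * f1 t + k2 * f2 t + k3 * f3 t + k4 * f4 t) \in Lfun P 1.
Proof.
move=> h1 h2 h3 h4.
have -> : (fun t => k1 * f1 t + k2 * f2 t + k3 * f3 t + k4 * f4 t) =
  (k1 \o* f1) \+ (k2 \o* f2) \+ (k3 \o* f3) \+ (k4 \o* f4).
  by apply/funext => t /=; rewrite /GRing.mulr_fun !(mulrC k1) !(mulrC k2) !(mulrC k3) !(mulrC k4).
by rewrite !rpredD // Lfun_scale.
Qed.

Lemma E_lin4 (f1 f2 f3 f4 h : T -> R) k1 k2 k3 k4 :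
  f1 \in Lfun P 1 -> f2 \in Lfun P 1 -> f3 \in Lfun P 1 -> f4 \in Lfun P 1 ->
  (forall t, h t = k1 * f1 t + k2 * f2 t + k3 * f3 t + k4 * f4 t) ->
  ('E_P[h] = (k1 * rE f1 + k2 * rE f2 + k3 * rE f3 + k4 * rE f4)%:E)%E.
Proof.
move=> h1 h2 h3 h4 hE.
have -> : h = (k1 \o* f1) \+ (k2 \o* f2) \+ (k3 \o* f3) \+ (k4 \o* f4).
  by apply/funext => t /=; rewrite hE /GRing.mulr_fun !(mulrC k1) !(mulrC k2) !(mulrC k3) !(mulrC k4).
have s1 := Lfun_scale k1 (lexx 1) h1.
have s2 := Lfun_scale k2 (lexx 1) h2.
have s3 := Lfun_scale k3 (lexx 1) h3.
have s4 := Lfun_scale k4 (lexx 1) h4.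
by rewrite !expectationD ?rpredD // !expectationZl // !EfE //.
Qed.

Lemma rE_lin2 (f1 f2 h : T -> R) k1 k2 :
  f1 \in Lfun P 1 -> f2 \in Lfun P 1 ->
  (forall t, h t = k1 * f1 t + k2 * f2 t) -> rE h = k1 * rE f1 + k2 * rE f2.
Proof.
move=> h1 h2 hE; rewrite /rE (@E_lin4 f1 f2 f1 f1 h k1 k2 0 0) //=.
  by rewrite !mul0r !addr0.
by move=> t; rewrite hE !mul0r !addr0.
Qed.
End lin.
Lemma ptwise (R : realType) (z y G w : R[i]) :
  complex.Re ((z - G * y) * w) ^+ 2 + complex.Im ((z - G * y) * w) ^+ 2 =
  (complex.Re w ^+ 2 + complex.Im w ^+ 2) *
   (complex.Re z ^+ 2 + complex.Im z ^+ 2) +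
  (complex.Re w ^+ 2 + complex.Im w ^+ 2) * (complex.Re G ^+ 2 + complex.Im G ^+ 2) *
   (complex.Re y ^+ 2 + complex.Im y ^+ 2) +
  (-2 * (complex.Re w ^+ 2 + complex.Im w ^+ 2) * complex.Re G) *
     complex.Re (z * (y^*)%C) +
  (-2 * (complex.Re w ^+ 2 + complex.Im w ^+ 2) * complex.Im G) *
     complex.Im (z * (y^*)%C).
Proof.
case: z => a b; case: y => c e; case: G => g1 g2; case: w => w1 w2 /=.
ring.
Qed.

Lemma creM (R : realType) d (T : measurableType d) (X Y : T -> R[i]) t :
  cre (fun t => X t * (Y t)^*)%C t = cre X t * cre Y t + cim X t * cim Y t.
Proof. rewrite /cre /cim; case: (X t) => a b; case: (Y t) => c e /=; ring. Qed.

Lemma cimM (R : realType) d (T : measurableType d) (X Y : T -> R[i]) t :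
  cim (fun t => X t * (Y t)^*)%C t = cim X t * cre Y t + (-1) * (cre X t * cim Y t).
Proof. rewrite /cre /cim; case: (X t) => a b; case: (Y t) => c e /=; ring. Qed.

Lemma expand (R : realType) d (T : measurableType d) (P : probability T R)
  (G S Rr : R[i]) (X Y : T -> R[i]) :
  finite_var P X -> finite_var P Y ->
  second_moment P (Zlim G S Rr X Y) =
  ((complex.Re (S * Rr)^-1 ^+ 2 + complex.Im (S * Rr)^-1 ^+ 2) *
     rE P (fun t => complex.Re (X t) ^+ 2 + complex.Im (X t) ^+ 2) +
   (complex.Re (S * Rr)^-1 ^+ 2 + complex.Im (S * Rr)^-1 ^+ 2) *
     (complex.Re G ^+ 2 + complex.Im G ^+ 2) *
     rE P (fun t => complex.Re (Y t) ^+ 2 + complex.Im (Y t) ^+ 2) +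
   (-2 * (complex.Re (S * Rr)^-1 ^+ 2 + complex.Im (S * Rr)^-1 ^+ 2) * complex.Re G) *
     rE P (cre (fun t => X t * (Y t)^*)%C) +
   (-2 * (complex.Re (S * Rr)^-1 ^+ 2 + complex.Im (S * Rr)^-1 ^+ 2) * complex.Im G) *
     rE P (cim (fun t => X t * (Y t)^*)%C))%:E.
Proof.
move=> [hXr hXi] [hYr hYi].
rewrite /second_moment; apply: E_lin4.
- exact: (rpredD (L1_sq hXr) (L1_sq hXi)).
- exact: (rpredD (L1_sq hYr) (L1_sq hYi)).
- have -> : cre (fun t => X t * (Y t)^*)%C =
     (fun t => cre X t * cre Y t) \+ (fun t => cim X t * cim Y t).
    by apply/funext => t; rewrite creM.
  exact: (rpredD (L1_mul hXr hYr) (L1_mul hXi hYi)).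
- have -> : cim (fun t => X t * (Y t)^*)%C =
     (fun t => cim X t * cre Y t) \+ (-1) \o* (fun t => cre X t * cim Y t).
    by apply/funext => t; rewrite cimM; simpl; rewrite /GRing.mulr_fun (mulrC _ (-1)).
  by rewrite rpredD ?Lfun_scale ?L1_mul.
- by move=> t; rewrite /Zlim ptwise.
Qed.

Lemma cpair_meas (R : realType) d (T : measurableType d) (P : probability T R)
  (X : T -> R[i]) : finite_var P X -> measurable_fun setT (cpair X).
Proof. by move=> [h1 h2]; apply: measurable_fun_pair; [exact: LmX h1|exact: LmX h2]. Qed.

Lemma indep_comp (R : realType) d (T : measurableType d) (P : probability T R)
  (X Y : T -> R[i]) (phi psi : (R * R)%type -> R) :
  measurable_fun setT phi -> measurable_fun setT psi -> cindependent P X Y ->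
  forall A B, measurable A -> measurable B ->
  P ((phi \o cpair X) @^-1` A `&` (psi \o cpair Y) @^-1` B) =
  (P ((phi \o cpair X) @^-1` A) * P ((psi \o cpair Y) @^-1` B))%E.
Proof.
move=> mphi mpsi hI A B mA mB.
apply: (hI (phi @^-1` A) (psi @^-1` B)).
- by rewrite -[X in measurable X]setTI; exact: mphi.
- by rewrite -[X in measurable X]setTI; exact: mpsi.
Qed.

Theorem theorem1 (R : realType) (d : measure_display) (T : measurableType d)
    (P : probability T R) (G S Rr : R[i])
    (Vy Vu Vy1 Vu2 : T -> R[i]) :
  S * Rr != 0 ->
  finite_var P Vy -> finite_var P Vu ->
  zero_mean P Vy -> zero_mean P Vu ->
  finite_var P Vy1 -> finite_var P Vu2 ->
  zero_mean P Vy1 -> zero_mean P Vu2 ->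
  same_distribution P Vy1 Vy -> same_distribution P Vu2 Vu ->
  cindependent P Vy1 Vu2 ->
  complex.Re ((G^*)%C * cexpect P (fun t => Vy t * (Vu t)^*)%C) < 0 ->
  (second_moment P (Zlim G S Rr Vy1 Vu2) < second_moment P (Zlim G S Rr Vy Vu))%E.
Proof.
move=> hSR fy fu zy zu fy1 fu2 zy1 zu2 sdy sdu hI hneg.
rewrite !expand // lte_fin.
have mf : measurable_fun setT (fun p : (R * R)%type => p.1 ^+ 2 + p.2 ^+ 2).
  by apply: measurable_funD; apply: measurable_funX;
    [exact: measurable_fst|exact: measurable_snd].
have f0 : forall p : (R * R)%type, 0 <= p.1 ^+ 2 + p.2 ^+ 2.
  by move=> p; rewrite addr_ge0 // sqr_ge0.
have e1 : rE P (fun t => complex.Re (Vy1 t) ^+ 2 + complex.Im (Vy1 t) ^+ 2) =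
          rE P (fun t => complex.Re (Vy t) ^+ 2 + complex.Im (Vy t) ^+ 2).
  rewrite /rE; congr fine.
  exact: (sd_E (cpair_meas fy1) (cpair_meas fy) sdy mf f0).
have e2 : rE P (fun t => complex.Re (Vu2 t) ^+ 2 + complex.Im (Vu2 t) ^+ 2) =
          rE P (fun t => complex.Re (Vu t) ^+ 2 + complex.Im (Vu t) ^+ 2).
  rewrite /rE; congr fine.
  exact: (sd_E (cpair_meas fu2) (cpair_meas fu) sdu mf f0).
have i0 : forall phi psi : (R * R)%type -> R,
    measurable_fun setT phi -> measurable_fun setT psi ->
    (phi \o cpair Vy1) \in Lfun P 2%:E -> (psi \o cpair Vu2) \in Lfun P 2%:E ->
    ('E_P[psi \o cpair Vu2] = 0)%E ->
    rE P (fun t => phi (cpair Vy1 t) * psi (cpair Vu2 t)) = 0.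
  move=> phi psi mphi mpsi l1 l2 E0.
  rewrite /rE.
  rewrite (indep_mul0 (LmX l1) (LmX l2) (indep_comp mphi mpsi hI)) //.
  - by apply/Lfun1_integrable; exact: L1_mul.
  - by apply/Lfun1_integrable; exact: L1_2.
case: fy1 => a1 b1; case: fu2 => c2 e2'.
case: zu2 => zc ze.
have u0 : rE P (cre (fun t => Vy1 t * (Vu2 t)^*)%C) = 0.
  rewrite (@rE_lin2 _ _ _ P (fun t => cre Vy1 t * cre Vu2 t)
     (fun t => cim Vy1 t * cim Vu2 t) _ 1 1); first last.
  - by move=> t; rewrite creM !mul1r.
  - exact: L1_mul.
  - exact: L1_mul.
  rewrite (i0 fst fst) ?(i0 snd snd) ?mulr0 ?addr0 //;
    (exact: measurable_fst || exact: measurable_snd).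
have v0 : rE P (cim (fun t => Vy1 t * (Vu2 t)^*)%C) = 0.
  rewrite (@rE_lin2 _ _ _ P (fun t => cim Vy1 t * cre Vu2 t)
     (fun t => cre Vy1 t * cim Vu2 t) _ 1 (-1)); first last.
  - by move=> t; rewrite cimM !mul1r.
  - exact: L1_mul.
  - exact: L1_mul.
  rewrite (i0 snd fst) ?(i0 fst snd) ?mulr0 ?addr0 //;
    (exact: measurable_fst || exact: measurable_snd).
rewrite e1 e2 u0 v0.
have hK : 0 < complex.Re (S * Rr)^-1 ^+ 2 + complex.Im (S * Rr)^-1 ^+ 2.
  have : (S * Rr)^-1 != 0 by rewrite invr_eq0.
  case: ((S * Rr)^-1) => w1 w2 /= hw.
  rewrite lt_neqAle addr_ge0 ?sqr_ge0 // andbT eq_sym.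
  apply: contra hw; rewrite paddr_eq0 ?sqr_ge0 // !sqrf_eq0 => /andP[/eqP-> /eqP->].
  by [].
have hneg' : complex.Re G * rE P (cre (fun t => Vy t * (Vu t)^*)%C) +
             complex.Im G * rE P (cim (fun t => Vy t * (Vu t)^*)%C) < 0.
  move: hneg; rewrite /cexpect /rE; case: (G) => g1 g2 /=.
  by rewrite mulNr opprK.
nra.
Qed.
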